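(* Let $x\in(0,\tfrac12)$ be irrational. (a) If $B(x)<\infty$, then $B(-x)<\infty$ and $$B^-(x):=\tfrac12\bigl(B(x)-B(-x)\bigr)=\frac{x}{2}\log\frac{1-x}{x}.$$ (b) If the series $W(x)$ converges, then the series $W(-x)$ converges and $$W^+(x):=\tfrac12\bigl(W(x)+W(-x)\bigr)=\frac{x}{2}\log\frac{1-x}{x}-\log(1-x).$$ In particular, since $B^-$ is odd and $1$-periodic and $W^+$ is even and $1$-periodic, $B^-$ and $W^+$ are uniformly bounded on the set of irrationals where they are defined.
   Context: For real $x$ let $\{x\}=x-\lfloor x\rfloor$ and let $A(y)=\{1/y\}$ for $y\in(0,1)$ (Gauss map), with iterates $A^j$, $A^0=\mathrm{id}$, and empty products equal to $1$. For irrational $x$ put $y=\{x\}$ and define $$B(x)=\sum_{j\ge0}\Bigl(\prod_{k=0}^{j-1}A^k(y)\Bigr)\log\frac{1}{A^j(y)}\in[0,+\infty],\qquad W(x)=\sum_{j\ge0}(-1)^j\Bigl(\prod_{k=0}^{j-1}A^k(y)\Bigr)\log\frac{1}{A^j(y)},$$ the latter being said to converge when its partial sums converge. Equivalently, $B$ and $W$ are $1$-periodic and satisfy, for irrational $x\in(0,1)$, $B(x)=-\log x+xB(1/x)$ and $W(x)=-\log x-xW(1/x)$ (with $W(x)$ convergent iff $W(1/x)$ convergent). *)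

(* Defs.v *)
From Stdlib Require Import Reals.
From Coquelicot Require Import Coquelicot.
Open Scope R_scope.

(* fractional part {x} = x - floor x  (Int_part is the floor) *)
Definition frac (x : R) : R := x - IZR (Int_part x).

Definition irrational (x : R) : Prop :=
  ~ exists (p q : Z), q <> 0%Z /\ x = IZR p / IZR q.

Definition gaussA (y : R) : R := frac (1 / y).

Fixpoint gaussIter (j : nat) (y : R) : R :=
  match j with O => y | S j' => gaussA (gaussIter j' y) end.

Fixpoint gaussProd (j : nat) (y : R) : R :=
  match j with O => 1 | S j' => gaussProd j' y * gaussIter j' y end.

Definition Bterm (x : R) (j : nat) : R :=
  gaussProd j (frac x) * ln (1 / gaussIter j (frac x)).

Definition Wterm (x : R) (j : nat) : R :=
  (-1) ^ j * Bterm x j.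

(* B(x) < oo  <->  the (nonnegative) series converges: ex_series (Bterm x);
   B(x) is then Series (Bterm x).
   W(x) converges <-> its partial sums converge: ex_series (Wterm x). *)
Definition Bminus (x : R) : R := (Series (Bterm x) - Series (Bterm (- x))) / 2.
Definition Wplus (x : R) : R := (Series (Wterm x) + Series (Wterm (- x))) / 2.

(* Main.v *)
Require Import Defs.
From Stdlib Require Import Reals Lra Lia.
From Coquelicot Require Import Coquelicot.
Open Scope R_scope.

Lemma Int_part_uniq (r : R) (z : Z) : IZR z <= r < IZR z + 1 -> Int_part r = z.
Proof.
  intros [H1 H2]. destruct (base_Int_part r) as [H3 H4].
  assert (A : (Int_part r < z + 1)%Z) by (apply lt_IZR; rewrite plus_IZR; simpl; lra).
  assert (B : (z < Int_part r + 1)%Z) by (apply lt_IZR; rewrite plus_IZR; simpl; lra).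
  lia.
Qed.

Lemma frac_eq (r : R) (z : Z) : IZR z <= r < IZR z + 1 -> frac r = r - IZR z.
Proof. intros H. unfold frac. now rewrite (Int_part_uniq r z H). Qed.

Lemma frac_range r : 0 <= frac r < 1.
Proof. unfold frac. destruct (base_Int_part r). lra. Qed.

Lemma frac_sub1 r : frac (r - 1) = frac r.
Proof.
  unfold frac at 2. rewrite (frac_eq (r-1) (Int_part r - 1)).
  - rewrite minus_IZR. simpl. lra.
  - rewrite minus_IZR. simpl. destruct (base_Int_part r). lra.
Qed.

Lemma iter_S j y : gaussIter (S j) y = gaussIter j (gaussA y).
Proof. induction j; simpl in *; auto. now rewrite <- IHj. Qed.

Lemma prod_S j y : gaussProd (S j) y = y * gaussProd j (gaussA y).
Proof.
  induction j. simpl; ring.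
  change (gaussProd (S (S j)) y) with (gaussProd (S j) y * gaussIter (S j) y).
  rewrite IHj, iter_S. simpl. ring.
Qed.

Section Core.
Variable x : R.
Hypothesis Hx : 0 < x < 1/2.

Lemma fx : frac x = x.
Proof. rewrite (frac_eq x 0); simpl; lra. Qed.
Lemma fmx : frac (- x) = 1 - x.
Proof. rewrite (frac_eq (-x) (-1)); simpl; lra. Qed.
Lemma A1 : gaussA (1 - x) = x / (1 - x).
Proof.
  unfold gaussA. rewrite (frac_eq _ 1). simpl. field. lra.
  simpl. split.
  - apply (Rmult_le_reg_r (1-x)). lra. field_simplify; lra.
  - apply (Rmult_lt_reg_r (1-x)). lra. field_simplify; lra.
Qed.
Lemma A2 : gaussA (x / (1 - x)) = gaussA x.
Proof.
  unfold gaussA. replace (1 / (x / (1-x))) with (1/x - 1) by (field; lra).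
  apply frac_sub1.
Qed.

Lemma Bshift j : Bterm (-x) (S (S j)) = Bterm x (S j).
Proof.
  unfold Bterm. rewrite fx, fmx.
  assert (I : gaussIter (S (S j)) (1 - x) = gaussIter (S j) x).
  { rewrite !iter_S, A1, A2. reflexivity. }
  assert (P : gaussProd (S (S j)) (1 - x) = gaussProd (S j) x).
  { rewrite !prod_S, A1, A2. field. lra. }
  now rewrite I, P.
Qed.
End Core.

Lemma lninv t : 0 < t -> ln (1 / t) = - ln t.
Proof. intros. rewrite ln_div by lra. rewrite ln_1. lra. Qed.

Lemma B01 x : 0 < x < 1/2 ->
  Bterm (-x) 0 = - ln (1 - x) /\ Bterm (-x) 1 = (1 - x) * (ln (1 - x) - ln x)
  /\ Bterm x 0 = - ln x.
Proof.
  intros Hx. unfold Bterm. rewrite (fx x), (fmx x) by lra. simpl.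
  rewrite A1 by lra.
  replace (1 / (x / (1 - x))) with ((1 - x) / x) by (field; lra).
  rewrite (ln_div (1-x) x) by lra. rewrite !lninv by lra. split; [|split]; ring.
Qed.

Lemma coreB x : 0 < x < 1/2 -> ex_series (Bterm x) ->
  ex_series (Bterm (-x)) /\
  Series (Bterm (-x)) = - ln (1 - x) + (1 - x) * (ln (1 - x) - ln x) + Series (Bterm x) + ln x.
Proof.
  intros Hx He. destruct (B01 x Hx) as (E0 & E1 & E2).
  assert (He1 : ex_series (fun k => Bterm x (S k))) by (apply (proj1 (ex_series_incr_1 (Bterm x))); exact He).
  assert (He2 : ex_series (fun k => Bterm (-x) (S (S k)))).
  { eapply ex_series_ext; [|exact He1]. intros; simpl. rewrite Bshift by auto; reflexivity. }
  assert (He3 : ex_series (Bterm (-x))).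
  { apply ex_series_incr_1. apply (ex_series_incr_1 (fun k => Bterm (-x) (S k))). exact He2. }
  split; auto.
  rewrite Series_incr_1 by auto.
  rewrite (Series_incr_1 (fun k => Bterm (-x) (S k))) by (now apply ex_series_incr_1).
  rewrite (Series_incr_1 (Bterm x)) by auto.
  rewrite (Series_ext (fun k => Bterm (-x) (S (S k))) (fun k => Bterm x (S k))) by (intros; rewrite Bshift by auto; reflexivity).
  rewrite E0, E1, E2. ring.
Qed.

Lemma Wshift x j : 0 < x < 1/2 -> Wterm (-x) (S (S j)) = - Wterm x (S j).
Proof. intros. unfold Wterm. rewrite Bshift by auto. simpl. ring. Qed.

Lemma coreW x : 0 < x < 1/2 -> ex_series (Wterm x) ->
  ex_series (Wterm (-x)) /\
  Series (Wterm (-x)) = - ln (1 - x) - (1 - x) * (ln (1 - x) - ln x) - Series (Wterm x) - ln x.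
Proof.
  intros Hx He. destruct (B01 x Hx) as (E0 & E1 & E2).
  assert (F0 : Wterm (-x) 0 = - ln (1 - x)) by (unfold Wterm; rewrite E0; simpl; ring).
  assert (F1 : Wterm (-x) 1 = - ((1 - x) * (ln (1 - x) - ln x))) by (unfold Wterm; rewrite E1; simpl; ring).
  assert (F2 : Wterm x 0 = - ln x) by (unfold Wterm; rewrite E2; simpl; ring).
  assert (He1 : ex_series (fun k => Wterm x (S k))) by (apply (proj1 (ex_series_incr_1 (Wterm x))); exact He).
  assert (He2 : ex_series (fun k => Wterm (-x) (S (S k)))).
  { eapply ex_series_ext; [|exact (ex_series_opp _ He1)]. intros; simpl. rewrite Wshift by auto. reflexivity. }
  assert (He3 : ex_series (Wterm (-x))).
  { apply ex_series_incr_1. apply (ex_series_incr_1 (fun k => Wterm (-x) (S k))). exact He2. }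
  split; auto.
  rewrite Series_incr_1 by auto.
  rewrite (Series_incr_1 (fun k => Wterm (-x) (S k))) by (now apply ex_series_incr_1).
  rewrite (Series_incr_1 (Wterm x)) by auto.
  rewrite (Series_ext (fun k => Wterm (-x) (S (S k))) (fun k => - Wterm x (S k))) by (intros; rewrite Wshift by auto; reflexivity).
  rewrite Series_opp.
  rewrite F0, F1, F2. ring.
Qed.

From Stdlib Require Import FunctionalExtensionality.

Lemma Bterm_eq a b : frac a = frac b -> Bterm a = Bterm b.
Proof. intros H. extensionality j. unfold Bterm. now rewrite H. Qed.
Lemma Wterm_eq a b : frac a = frac b -> Wterm a = Wterm b.
Proof. intros H. extensionality j. unfold Wterm. now rewrite (Bterm_eq a b H). Qed.

Lemma reduce x : irrational x -> exists t, 0 < t < 1/2 /\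
  ((frac x = frac t /\ frac (-x) = frac (-t)) \/ (frac x = frac (-t) /\ frac (-x) = frac t)).
Proof.
  intros Hi. pose (p := Int_part x). pose (y := x - IZR p).
  assert (Hy : frac x = y) by reflexivity.
  destruct (frac_range x) as [H0 H1]. rewrite Hy in H0, H1.
  assert (Hy0 : y <> 0).
  { intros E. apply Hi. exists p, 1%Z. split; [lia|]. unfold y in E. simpl. lra. }
  assert (Hy2 : y <> 1/2).
  { intros E. apply Hi. exists (2 * p + 1)%Z, 2%Z. split; [lia|].
    rewrite plus_IZR, mult_IZR. unfold y in E. simpl. field_simplify. lra. }
  assert (Fmx : frac (-x) = 1 - y).
  { rewrite (frac_eq (-x) (- p - 1)). rewrite minus_IZR, opp_IZR. unfold y. simpl. lra.
    rewrite minus_IZR, opp_IZR. unfold y in *. simpl. lra. }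
  destruct (Rlt_or_le y (1/2)) as [Hl | Hl].
  - exists y. split. lra. left. rewrite (fx y), (fmx y) by lra. lra.
  - exists (1 - y). split. lra. right. rewrite (fx (1-y)), (fmx (1-y)) by lra. lra.
Qed.

Lemma ln_le_x t : 0 < t -> ln t <= t - 1.
Proof.
  intros. rewrite <- (ln_exp (t - 1)). apply ln_le. auto.
  pose proof (exp_ineq1_le (t-1)). lra.
Qed.

Lemma bounds t : 0 < t < 1/2 -> -1 <= ln (1 - t) <= 0 /\ 0 <= - ln t /\ t * (- ln t) <= 1.
Proof.
  intros Ht.
  pose proof (ln_le_x (1 - t) ltac:(lra)).
  pose proof (ln_le_x (1 / (1 - t)) ltac:(apply Rdiv_lt_0_compat; lra)).
  pose proof (ln_le_x (1 / t) ltac:(apply Rdiv_lt_0_compat; lra)).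
  pose proof (ln_le_x t ltac:(lra)).
  rewrite lninv in * by lra.
  assert (1 / (1 - t) - 1 <= 1).
  { apply (Rmult_le_reg_r (1-t)). lra. field_simplify; lra. }
  assert (t * (1 / t - 1) <= 1) by (field_simplify; lra).
  split; [lra|]. split; [lra|]. nra.
Qed.

Lemma Bval t : 0 < t < 1/2 -> ex_series (Bterm t) ->
  (Series (Bterm t) - Series (Bterm (-t))) / 2 = t / 2 * ln ((1 - t) / t).
Proof.
  intros Ht He. destruct (coreB t Ht He) as [_ E]. rewrite E, ln_div by lra. field.
Qed.

Lemma Wval t : 0 < t < 1/2 -> ex_series (Wterm t) ->
  (Series (Wterm t) + Series (Wterm (-t))) / 2 = t / 2 * ln ((1 - t) / t) - ln (1 - t).
Proof.
  intros Ht He. destruct (coreW t Ht He) as [_ E]. rewrite E, ln_div by lra. field.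
Qed.

Lemma bndB t : 0 < t < 1/2 -> Rabs (t / 2 * ln ((1 - t) / t)) <= 1.
Proof.
  intros Ht. destruct (bounds t Ht) as (A & B & C). rewrite ln_div by lra.
  apply Rabs_le. split; nra.
Qed.

Lemma bndW t : 0 < t < 1/2 -> Rabs (t / 2 * ln ((1 - t) / t) - ln (1 - t)) <= 2.
Proof.
  intros Ht. destruct (bounds t Ht) as (A & B & C). rewrite ln_div by lra.
  apply Rabs_le. split; nra.
Qed.

Theorem mainTheorem3 :
  (* (a) *)
  (forall x : R, irrational x -> 0 < x < 1 / 2 ->
     ex_series (Bterm x) ->
     ex_series (Bterm (- x)) /\ Bminus x = x / 2 * ln ((1 - x) / x)) /\
  (* (b) *)
  (forall x : R, irrational x -> 0 < x < 1 / 2 ->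
     ex_series (Wterm x) ->
     ex_series (Wterm (- x)) /\
     Wplus x = x / 2 * ln ((1 - x) / x) - ln (1 - x)) /\
  (* uniform boundedness of B^- and W^+ on the irrationals where defined *)
  (exists C : R, forall x : R, irrational x ->
     ex_series (Bterm x) -> ex_series (Bterm (- x)) -> Rabs (Bminus x) <= C) /\
  (exists C : R, forall x : R, irrational x ->
     ex_series (Wterm x) -> ex_series (Wterm (- x)) -> Rabs (Wplus x) <= C).
Proof.
  split; [|split; [|split]].
  - intros x _ Hx He. split. apply (coreB x Hx He). unfold Bminus. now apply Bval.
  - intros x _ Hx He. split. apply (coreW x Hx He). unfold Wplus. now apply Wval.
  - exists 1. intros x Hi H1 H2. unfold Bminus.
    destruct (reduce x Hi) as (t & Ht & [[E1 E2] | [E1 E2]]).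
    + rewrite (Bterm_eq _ _ E1), (Bterm_eq _ _ E2) in *. rewrite Bval; auto. now apply bndB.
    + rewrite (Bterm_eq _ _ E1), (Bterm_eq _ _ E2) in *.
      replace ((Series (Bterm (- t)) - Series (Bterm t)) / 2)
        with (- ((Series (Bterm t) - Series (Bterm (- t))) / 2)) by field.
      rewrite Rabs_Ropp, Bval; auto. now apply bndB.
  - exists 2. intros x Hi H1 H2. unfold Wplus.
    destruct (reduce x Hi) as (t & Ht & [[E1 E2] | [E1 E2]]).
    + rewrite (Wterm_eq _ _ E1), (Wterm_eq _ _ E2) in *. rewrite Wval; auto. now apply bndW.
    + rewrite (Wterm_eq _ _ E1), (Wterm_eq _ _ E2) in *. rewrite Rplus_comm, Wval; auto. now apply bndW.
Qed.
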